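(* Let $d\ge2$ and let $\omega$ be any configuration of faces. For each finite open cluster $C^*$ of the dual bond configuration there is a unique hole $D$ of $K(\omega)$ with $D\cap(\mathbb{Z}^d)^*$ equal to the vertex set of $C^*$, and the map $C^*\mapsto D$ is a bijection between the finite open dual clusters and the holes. Moreover, under this bijection two holes $D,D'$ are adjacent if and only if the corresponding finite clusters $C^*,(C^* )'$ satisfy $\Delta C^*\cap\Delta (C^* )'\neq\emptyset$.
   Context: A face is a $(d-1)$-dimensional elementary cube in $\mathbb{R}^d$ (a product of intervals $[l,l]$ or $[l,l+1]$, $l\in\mathbb{Z}$, with exactly one degenerate factor). A configuration $\omega$ declares each face open or closed; $K(\omega)$ is the union of open faces. A hole is a bounded connected component of $\mathbb{R}^d\setminus K(\omega)$; two holes are adjacent iff some face is contained in the boundary of both. Dual lattice: vertices $(\mathbb{Z}^d)^*=\mathbb{Z}^d+(1/2,\dots,1/2)$, dual bonds $\langle x^*,y^*\rangle$ with $\|x^*-y^*\|_1=1$. Each dual bond $e^*$ meets exactly one face $Q_{e^*}$ (namely $Q_{e^*}=B_{x^*}\cap B_{y^*}$ where $B_{z^*}=\prod_i[(z^* )_i-1/2,(z^* )_i+1/2]$); the dual bond $e^*$ is declared open iff $Q_{e^*}$ is closed. An open dual cluster is a connected component (possibly a single vertex) of the graph on $(\mathbb{Z}^d)^*$ formed by open dual bonds. For a cluster $C^*$, $\Delta C^*$ is the set of dual bonds with exactly one endpoint in $C^*$. *)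

(* Defs.v *)
From HB Require Import structures.
From mathcomp Require Import all_boot all_order all_algebra.
From mathcomp Require Import all_classical all_reals all_analysis.
From Stdlib Require Import Relations.
Unset Printing Implicit Defensive.
Import Order.TTheory GRing.Theory Num.Theory.
Import numFieldNormedType.Exports.
Local Open Scope classical_set_scope.
Local Open Scope ring_scope.

(* A face is encoded by (l, j): the (d-1)-dimensional elementary cube
   prod_i I_i with I_j = [l_j, l_j] and I_i = [l_i, l_i + 1] for i <> j. *)
Definition face (d : nat) : Type := ('rV[int]_d * 'I_d)%type.

Definition face_set (R : realType) (d : nat) (f : face d) : set 'rV[R]_d :=
  [set x | forall i : 'I_d,
     if i == f.2 then x ord0 i = (f.1 ord0 i)%:~R
     else ((f.1 ord0 i)%:~R <= x ord0 i <= (f.1 ord0 i)%:~R + 1)].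

(* A configuration declares each face open (true) or closed (false). *)
Definition config (d : nat) : Type := face d -> bool.

Definition Kset (R : realType) (d : nat) (omega : config d) : set 'rV[R]_d :=
  \bigcup_(f in [set f | omega f]) face_set R d f.

Definition hole (R : realType) (d : nat) (omega : config d) (D : set 'rV[R]_d) : Prop :=
  (exists x, (~` Kset R d omega) x /\ D = connected_component (~` Kset R d omega) x)
  /\ bounded_set D.

Definition boundary (R : realType) (d : nat) (A : set 'rV[R]_d) : set 'rV[R]_d :=
  closure A `\` interior A.

Definition adjacent_holes (R : realType) (d : nat) (D D' : set 'rV[R]_d) : Prop :=
  exists f : face d, face_set R d f `<=` boundary R d D /\ face_set R d f `<=` boundary R d D'.

(* Dual lattice: z : 'rV[int]_d encodes the dual vertex z + (1/2,...,1/2). *)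
Definition dual_pt (R : realType) (d : nat) (z : 'rV[int]_d) : 'rV[R]_d :=
  \row_i ((z ord0 i)%:~R + 2^-1).

Definition dual_lattice (R : realType) (d : nat) : set 'rV[R]_d :=
  [set p | exists z, p = dual_pt R d z].

(* B_{z*} = prod_i [z*_i - 1/2, z*_i + 1/2] = prod_i [z_i, z_i + 1]. *)
Definition Bbox (R : realType) (d : nat) (z : 'rV[int]_d) : set 'rV[R]_d :=
  [set x | forall i : 'I_d, (z ord0 i)%:~R <= x ord0 i <= (z ord0 i)%:~R + 1].

Definition dual_adj (d : nat) (x y : 'rV[int]_d) : Prop :=
  (\sum_(i < d) `|x ord0 i - y ord0 i|)%R = 1.

Definition dual_bond (d : nat) (e : set 'rV[int]_d) : Prop :=
  exists x y, dual_adj d x y /\ e = [set x; y].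

Definition open_dual_adj (R : realType) (d : nat) (omega : config d)
    (x y : 'rV[int]_d) : Prop :=
  dual_adj d x y /\
  exists f : face d, face_set R d f = Bbox R d x `&` Bbox R d y /\ omega f = false.

Definition open_cluster (R : realType) (d : nat) (omega : config d)
    (C : set 'rV[int]_d) : Prop :=
  exists x, C = [set y | clos_refl_trans _ (open_dual_adj R d omega) x y].

Definition finite_open_cluster (R : realType) (d : nat) (omega : config d)
    (C : set 'rV[int]_d) : Prop :=
  open_cluster R d omega C /\ finite_set C.

Definition edge_boundary (d : nat) (C : set 'rV[int]_d) : set (set 'rV[int]_d) :=
  [set e | dual_bond d e /\
     exists x y, e = [set x; y] /\ x <> y /\ C x /\ ~ C y].

(* Main.v *)
Require Import Defs.
From HB Require Import structures.
From mathcomp Require Import all_boot all_order all_algebra.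
From mathcomp Require Import all_classical all_reals all_analysis.
From mathcomp Require Import lra zify.
From Stdlib Require Import Relations.
Import Order.TTheory GRing.Theory Num.Theory.
Import numFieldNormedType.Exports.
Local Open Scope classical_set_scope.
Local Open Scope ring_scope.

Section Basic.
Variable R : realType.

Lemma int_between (z l : int) : ~ ((z%:~R : R) < (l%:~R : R) < (z%:~R : R) + 1).
Proof.
move=> /andP[h1 h2].
have a : z < l by rewrite -(ltr_int R).
have b : l < z + 1 by rewrite -(ltr_int R) intrD.
lia.
Qed.

Lemma half_not_int (z l : int) : (z%:~R + 2^-1 : R) <> l%:~R.
Proof.
move=> h; apply: (@int_between z l); rewrite -h.
have h2 : (2^-1 : R) = 1/2 by rewrite div1r.
rewrite h2; apply/andP; split; lra.
Qed.

Lemma loc1 (p : R) : exists2 e : R, 0 < e & forall q : R, `|q - p| < e ->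
  forall l : int, (l%:~R <= q <= l%:~R + 1 -> l%:~R <= p <= l%:~R + 1) /\
                  (q = l%:~R -> p = l%:~R).
Proof.
pose n := Num.floor p.
have [hn1 hn2] : (n%:~R <= p) /\ (p < n%:~R + 1).
  by split; [exact: Num.Theory.floor_le| rewrite -intrD1; exact: Num.Theory.floorD1_gt].
have [pn|pn] := eqVneq p n%:~R.
  exists 1; first lra.
  move=> q hq l; rewrite ltr_norml in hq; move/andP: hq => [hq1 hq2].
  split.
    move=> /andP[h1 h2].
    have a1 : l < n + 1 by rewrite -(ltr_int R) intrD; lra.
    have a2 : n < l + 2 by rewrite -(ltr_int R) intrD; lra.
    have b1 : (l%:~R : R) <= n%:~R by rewrite ler_int; lia.
    have b2 : (n%:~R : R) <= l%:~R + 1 by rewrite -intrD1 ler_int; lia.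
    rewrite pn; apply/andP; split; lra.
  move=> ql.
  have a1 : l < n + 1 by rewrite -(ltr_int R) intrD; lra.
  have a2 : n < l + 1 by rewrite -(ltr_int R) intrD; lra.
  rewrite pn; congr (_%:~R); lia.
have hnp : n%:~R < p by rewrite lt_neqAle eq_sym pn hn1.
pose e := Num.min (p - n%:~R) (n%:~R + 1 - p).
have : e <= e by [].
rewrite {2}/e le_min => /andP[e1 e2].
exists e; first by rewrite lt_min; apply/andP; split; lra.
move=> q hq l; rewrite ltr_norml in hq; move/andP: hq => [hq1 hq2].
split.
  move=> /andP[h1 h2].
  have a1 : l < n + 1 by rewrite -(ltr_int R) intrD; lra.
  have a2 : n < l + 1 by rewrite -(ltr_int R) intrD; lra.
  have b1 : (l%:~R : R) <= n%:~R by rewrite ler_int; lia.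
  have b2 : (n%:~R : R) + 1 <= l%:~R + 1 by rewrite -!intrD1 ler_int; lia.
  apply/andP; split; lra.
move=> ql; exfalso; apply: (@int_between n l); rewrite -ql; apply/andP; split; lra.
Qed.


Lemma coord_le_norm {d : nat} (v : 'rV[R]_d) i : `|v ord0 i| <= `|v|.
Proof.
rewrite [leRHS]/Num.norm /= mx_normrE.
apply/bigmax_geP; right; exists (ord0, i) => //.
Qed.

Lemma norm_le_coords {d : nat} (v : 'rV[R]_d) (M : R) : 0 <= M ->
  (forall i, `|v ord0 i| <= M) -> `|v| <= M.
Proof.
move=> M0 h; rewrite [leLHS]/Num.norm /= mx_normrE.
apply/bigmax_leP; split => // -[a b] _ /=.
by rewrite (ord1 a).
Qed.

Lemma near_coords {d : nat} (p : 'rV[R]_d) (P : 'I_d -> R -> Prop) :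
  (forall i, exists2 e : R, 0 < e & forall q, `|q - p ord0 i| < e -> P i q) ->
  nbhs p (fun q : 'rV[R]_d => forall i, P i (q ord0 i)).
Proof.
move=> H.
apply: (@filter_forall _ _ (fun i (q : 'rV[R]_d) => P i (q ord0 i)) (nbhs p) (nbhs_filter p)) => i.
have [e e0 He] := H i.
have hb := nbhsx_ballx p e e0.
apply: (filterS _ hb) => q.
rewrite -ball_normE => hq.
have hq' : `|p - q| < e := hq.
have h1 := coord_le_norm (p - q) i.
rewrite !mxE distrC in h1.
apply: He.
exact: le_lt_trans h1 hq'.
Qed.

Lemma loc_row {d : nat} (p : 'rV[R]_d) :
  nbhs p (fun q : 'rV[R]_d => forall i (l : int),
  ((l%:~R <= q ord0 i <= l%:~R + 1 -> l%:~R <= p ord0 i <= l%:~R + 1) /\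
   (q ord0 i = l%:~R -> p ord0 i = l%:~R))).
Proof.
apply: (@near_coords _ p (fun i r => forall l : int,
  ((l%:~R <= r <= l%:~R + 1 -> l%:~R <= p ord0 i <= l%:~R + 1) /\
   (r = l%:~R -> p ord0 i = l%:~R)))) => i.
exact: loc1.
Qed.

End Basic.

Section Main.
Variables (R : realType) (d : nat) (omega : config d).
Local Notation K := (Kset R d omega).
Local Notation oda := (open_dual_adj R d omega).
Local Notation rt := (clos_refl_trans _ oda).
Local Notation Bb := (Bbox R d).
Local Notation fs := (face_set R d).
Local Notation dp := (dual_pt R d).
Implicit Types (z w a b c x y : 'rV[int]_d) (p q m : 'rV[R]_d) (f g : face d).

Lemma half_eq : (2^-1 : R) = 1/2. Proof. by rewrite div1r. Qed.

Lemma dpE z i : dp z ord0 i = (z ord0 i)%:~R + 1/2.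
Proof. by rewrite /dual_pt mxE div1r. Qed.

Lemma KP (p : 'rV[R]_d) : K p <-> exists f, omega f /\ fs f p.
Proof. by split => [[f hf hp]|[f [hf hp]]]; exists f. Qed.

Lemma open_notK (z : 'rV[int]_d) (p : 'rV[R]_d) :
  (forall i, (z ord0 i)%:~R < p ord0 i < (z ord0 i)%:~R + 1) -> ~ K p.
Proof.
move=> h /KP [f [_ hp]].
have := hp f.2; rewrite eqxx => e.
apply: (@int_between R (z ord0 f.2) (f.1 ord0 f.2)); rewrite -e; exact: h.
Qed.

Lemma dp_open z i : (z ord0 i)%:~R < dp z ord0 i < (z ord0 i)%:~R + 1.
Proof. rewrite dpE; apply/andP; split; lra. Qed.

Lemma dp_notK z : ~ K (dp z).
Proof. apply: (open_notK z) => i; exact: dp_open. Qed.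

Lemma dp_Bb z : Bb z (dp z).
Proof. move=> i; have /andP[h1 h2] := dp_open z i; apply/andP; split; lra. Qed.

Lemma seg_real (a x t : R) : a <= x -> x <= a + 1 -> 0 < t -> t <= 1 ->
  a < x + t * (a + 2^-1 - x) < a + 1.
Proof.
move=> h1 h2 t0 t1.
have hh : (2^-1 : R) = 1/2 by rewrite div1r.
rewrite hh.
have p1 : 0 <= (1 - t) * (x - a) by apply: mulr_ge0; lra.
have p2 : 0 <= (1 - t) * (a + 1 - x) by apply: mulr_ge0; lra.
apply/andP; split; nra.
Qed.

Lemma seg_open z (q : 'rV[R]_d) (t : R) : Bb z q -> 0 < t <= 1 -> forall i,
  (z ord0 i)%:~R < (q + t *: (dp z - q)) ord0 i < (z ord0 i)%:~R + 1.
Proof.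
move=> hq /andP[t0 t1] i; rewrite !mxE.
have /andP[h1 h2] := hq i.
exact: seg_real.
Qed.

Lemma floor_Bb (p : 'rV[R]_d) : Bb (\row_i Num.floor (p ord0 i)) p.
Proof.
move=> i; rewrite mxE; apply/andP; split; first exact: Num.Theory.floor_le.
rewrite -intrD1; exact/ltW/Num.Theory.floorD1_gt.
Qed.

Lemma loc (p : 'rV[R]_d) : nbhs p (fun q : 'rV[R]_d =>
  (forall w, Bb w q -> Bb w p) /\ (forall f, fs f q -> fs f p)).
Proof.
have hb := loc_row R p.
apply: (filterS _ hb) => q H; split.
  move=> w hw i; exact: ((H i (w ord0 i)).1 (hw i)).
move=> f hf i; have := hf i; case: (i == f.2) => h.
  exact: ((H i (f.1 ord0 i)).2 h).
exact: ((H i (f.1 ord0 i)).1 h).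
Qed.


Definition fface c (j : 'I_d) : face d :=
  (\row_i (if i == j then c ord0 j + 1 else c ord0 i), j).

Lemma fface_eq c c' j : (forall i, i != j -> c ord0 i = c' ord0 i) ->
  c' ord0 j = c ord0 j + 1 -> fs (fface c j) = Bb c `&` Bb c'.
Proof.
move=> ho hj; apply/seteqP; split => x hx.
  split => i; have := hx i; rewrite /fface /= mxE;
  have [->|nij] := eqVneq i j; rewrite ?eqxx ?(negbTE nij) //.
  - by move=> ->; rewrite intrD; apply/andP; split; lra.
  - by move=> ->; rewrite hj intrD; apply/andP; split; lra.
  - by rewrite -(ho i nij).
case: hx => h1 h2 i; rewrite /fface /= mxE.
have [->|nij] := eqVneq i j; rewrite ?eqxx ?(negbTE nij) //.
have /andP[a1 a2] := h1 j; have /andP[b1 b2] := h2 j.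
rewrite hj intrD in b1 b2 *; lra.
Qed.

Lemma dual_adj_of c c' j : (forall i, i != j -> c ord0 i = c' ord0 i) ->
  c' ord0 j = c ord0 j + 1 -> dual_adj d c c'.
Proof.
move=> ho hj; rewrite /dual_adj (bigD1 j) //= big1 => [|i hij]; last first.
  by rewrite (ho i hij) subrr normr0.
by rewrite hj addr0 opprD addrA subrr sub0r normrN normr1.
Qed.

Lemma dual_adj_sym a b : dual_adj d a b -> dual_adj d b a.
Proof.
rewrite /dual_adj => <-; apply: eq_bigr => i _; exact: distrC.
Qed.

Lemma oda_sym a b : oda a b -> oda b a.
Proof.
move=> [h [f [hf ho]]]; split; first exact: dual_adj_sym.
by exists f; split => //; rewrite setIC.
Qed.

Lemma rt_sym a b : rt a b -> rt b a.
Proof.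
elim => [x y h|x|x y w _ h1 _ h2]; first exact/rt_step/oda_sym.
  exact: rt_refl.
exact: rt_trans h2 h1.
Qed.

Lemma step_oda p c c' j : ~ K p -> Bb c p -> Bb c' p ->
  (forall i, i != j -> c ord0 i = c' ord0 i) ->
  c' ord0 j = c ord0 j + 1 -> oda c c'.
Proof.
move=> nK hc hc' ho hj; split; first exact: (dual_adj_of c c' j ho hj).
exists (fface c j); split; first exact: fface_eq.
apply/negP => hf; apply: nK; apply/KP; exists (fface c j); split => //.
by rewrite (fface_eq c c' j ho hj).
Qed.

Lemma cl_same p a b : ~ K p -> Bb a p -> Bb b p -> rt a b.
Proof.
move=> nK ha hb.
pose r k := \row_i (if (i < k)%N then b ord0 i else a ord0 i) : 'rV[int]_d.
have hr k : Bb (r k) p.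
  by move=> i; rewrite /r mxE; case: ifP => _; [exact: hb|exact: ha].
have r0 : r 0%N = a by apply/rowP => i; rewrite /r mxE.
have rd : r d = b by apply/rowP => i; rewrite /r mxE ltn_ord.
suff H : forall k, (k <= d)%N -> rt a (r k) by rewrite -rd; apply: H.
elim => [_|k IH hk]; first by rewrite r0; exact: rt_refl.
apply: rt_trans (IH (ltnW hk)) _.
pose j := Ordinal hk.
have ho : forall i, i != j -> r k ord0 i = r k.+1 ord0 i.
  move=> i hij; have hne : (i : nat) != k := hij.
  rewrite /r !mxE ltnS.
  by have -> : (i <= k)%N = (i < k)%N by rewrite leq_eqVlt (negbTE hne).
have ej : r k.+1 ord0 j = b ord0 j by rewrite /r mxE /= ltnSn.
have ej' : r k ord0 j = a ord0 j by rewrite /r mxE /= ltnn.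
have [eab|nab] := eqVneq (a ord0 j) (b ord0 j).
  have -> : r k.+1 = r k.
    apply/rowP => i; have [->|nij] := eqVneq i j; last by rewrite (ho i nij).
    by rewrite ej ej' eab.
  exact: rt_refl.
have /andP[a1 a2] := ha j; have /andP[b1 b2] := hb j.
have i1 : a ord0 j <= b ord0 j + 1 by rewrite -(ler_int R) intrD; lra.
have i2 : b ord0 j <= a ord0 j + 1 by rewrite -(ler_int R) intrD; lra.
have [hlt|hlt] : b ord0 j = a ord0 j + 1 \/ a ord0 j = b ord0 j + 1.
  move/eqP: nab; lia.
  apply/rt_step; apply: (step_oda p (r k) (r k.+1) j nK (hr k) (hr k.+1) ho).
  by rewrite ej ej'.
apply/rt_step/oda_sym; apply: (step_oda p (r k.+1) (r k) j nK (hr k.+1) (hr k)).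
  by move=> i hij; rewrite (ho i hij).
by rewrite ej ej'.
Qed.


Definition U z := [set p : 'rV[R]_d | ~ K p /\ exists w, Bb w p /\ rt z w].

Lemma comp_sub_U z p : ~ K p -> Bb z p ->
  connected_component (~` K) p `<=` U z.
Proof.
move=> nKp hz.
have sep : separated (U z) (~` K `\` U z).
  split.
  - apply/seteqP; split => // x [hcl [nKx nUx]].
    have [q [[nKq [w [hw hr]]] [Hq1 Hq2]]] := hcl _ (loc x).
    by apply: nUx; split => //; exists w; split => //; exact: Hq1 w hw.
  - apply/seteqP; split => // x [[nKx [w [hw hr]]] hcl].
    have [q [[nKq nUq] [Hq1 _]]] := hcl _ (loc x).
    apply: nUq; split => //; exists (\row_i Num.floor (q ord0 i)); split.
      exact: floor_Bb.
    apply: rt_trans hr _; apply: (cl_same x w _ nKx hw).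
    exact: Hq1 _ (floor_Bb q).
have := connected_subset sep _ (@component_connected _ (~` K) p).
case.
- move=> x hx; have nKx := connected_component_sub hx.
  by have [h|h] := pselect (U z x); [left|right].
- by [].
move=> h; exfalso.
have [_ hn] := h p (connected_component_refl nKp).
by apply: hn; split => //; exists z; split => //; exact: rt_refl.
Qed.


Lemma seg_comp z q : ~ K q -> Bb z q -> connected_component (~` K) q (dp z).
Proof.
move=> nKq hq.
pose g := fun t : R => q + t *: (dp z - q).
have cg : {within `[0, 1], continuous g}.
  apply: continuous_subspaceT => t; rewrite /g.
  have h1 : {for t, continuous (fun _ : R => q)} by exact: cst_continuous.
  have h2 : {for t, continuous (fun t : R => t *: (dp z - q))}.
    by apply: continuousZr_tmp; exact: cvg_id.
  exact: (continuousD h1 h2).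
have S := connected_continuous_connected (@segment_connected R 0 1) cg.
have Sq : (g @` `[0, 1]) q.
  by exists 0; [rewrite /= in_itv /= lexx ler01|rewrite /g scale0r addr0].
have S1 : (g @` `[0, 1]) (dp z).
  by exists 1; [rewrite /= in_itv /= lexx ler01|rewrite /g scale1r addrC subrK].
apply: (connected_component_max Sq _ S) S1.
move=> x [t ht <-].
move: ht; rewrite /= in_itv /= => /andP[t0 t1].
have [->|tn0] := eqVneq t 0; first by rewrite /g scale0r addr0.
apply: (open_notK z) => i; apply: seg_open => //.
by rewrite t1 andbT lt_neqAle eq_sym tn0.
Qed.


Definition mid f : 'rV[R]_d := \row_i (if i == f.2 then (f.1 ord0 i)%:~R
  else (f.1 ord0 i)%:~R + 2^-1 : R).

Lemma half_bounds : (0 : R) < (2^-1 : R) < 1.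
Proof. by rewrite -div1r; apply/andP; split; lra. Qed.

Lemma mid_fs f : fs f (mid f).
Proof.
move=> i; rewrite /mid mxE; case: (i == f.2) => //.
have /andP[h1 h2] := half_bounds; apply/andP; split; lra.
Qed.

Lemma mid_uniq f g : fs g (mid f) -> g = f.
Proof.
move=> H.
have ej : g.2 = f.2.
  apply/eqP/negP => /negP hne.
  have := H g.2; rewrite eqxx /mid mxE (negbTE hne) => e.
  exact: half_not_int e.
have el : g.1 = f.1.
  apply/rowP => i; have := H i; rewrite /mid mxE ej.
  have [_|nij] := eqVneq i f.2.
    by move/intr_inj.
  move=> /andP[h1 h2].
  have /andP[k1 k2] := half_bounds.
  have a1 : g.1 ord0 i < f.1 ord0 i + 1 by rewrite -(ltr_int R) intrD; lra.
  have a2 : f.1 ord0 i < g.1 ord0 i + 1 by rewrite -(ltr_int R) intrD; lra.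
  by apply/eqP; rewrite eq_le -ltzD1 a1 -ltzD1 a2.
by move: ej el; clear H; case: f => l j; case: g => l' j' /= -> ->.
Qed.

Lemma mid_notK f : omega f = false -> ~ K (mid f).
Proof.
move=> hf /KP [g [hg hm]].
by have e := mid_uniq f g hm; rewrite e hf in hg.
Qed.

Lemma oda_comp a b : oda a b -> connected_component (~` K) (dp a) (dp b).
Proof.
move=> [_ [f [hf ho]]].
have hm := mid_fs f; rewrite hf in hm; case: hm => ha hb.
have nK := mid_notK f ho.
have h1 := seg_comp a (mid f) nK ha.
have h2 := seg_comp b (mid f) nK hb.
exact: connected_component_trans (connected_component_sym h1) h2.
Qed.

Lemma rt_comp a b : rt a b -> connected_component (~` K) (dp a) (dp b).
Proof.
elim => [x y h|x|x y w _ h1 _ h2]; first exact: oda_comp.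
  exact: connected_component_refl (dp_notK x).
exact: connected_component_trans h1 h2.
Qed.

Lemma U_comp z : connected_component (~` K) (dp z) = U z.
Proof.
apply/seteqP; split; first exact: comp_sub_U (dp_notK z) (dp_Bb z).
move=> q [nKq [w [hw hr]]].
exact: connected_component_trans (rt_comp z w hr)
  (connected_component_sym (seg_comp w q nKq hw)).
Qed.

Lemma comp_U p z : ~ K p -> Bb z p -> connected_component (~` K) p = U z.
Proof.
move=> nKp hz; rewrite -U_comp; apply: same_connected_component.
exact: (seg_comp z p nKp hz).
Qed.


Lemma dp_Bb_eq w z : Bb w (dp z) -> w = z.
Proof.
move=> H; apply/rowP => i; have := H i; rewrite dpE => /andP[h1 h2].
have a1 : w ord0 i < z ord0 i + 1 by rewrite -(ltr_int R) intrD; lra.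
have a2 : z ord0 i < w ord0 i + 1 by rewrite -(ltr_int R) intrD; lra.
by apply/eqP; rewrite eq_le -ltzD1 a1 -ltzD1 a2.
Qed.

Lemma dp_inj : injective dp.
Proof. move=> a b e; apply: dp_Bb_eq; rewrite -e; exact: dp_Bb. Qed.

Definition cl z := [set y | rt z y].

Lemma U_lat z : U z `&` dual_lattice R d = dp @` cl z.
Proof.
apply/seteqP; split.
  move=> x [[nK [w [hw hr]]] [y ey]]; subst x.
  by have e := dp_Bb_eq w y hw; subst w; exists y.
move=> x [y hy <-]; split; last by exists y.
split; first exact: dp_notK.
by exists y; split => //; exact: dp_Bb.
Qed.

Lemma img_inj (A B : set 'rV[int]_d) : dp @` A = dp @` B -> A = B.
Proof.
move=> e; apply/seteqP; split => y hy.
  have : (dp @` B) (dp y) by rewrite -e; exists y.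
  by case=> y' hy' /dp_inj <-.
have : (dp @` A) (dp y) by rewrite e; exists y.
by case=> y' hy' /dp_inj <-.
Qed.

Lemma hole_U D : hole R d omega D -> exists z, D = U z.
Proof.
move=> [[x [nKx ->]] _]; exists (\row_i Num.floor (x ord0 i)).
exact: comp_U nKx (floor_Bb x).
Qed.

Lemma le_sum_ord (F : 'I_d -> int) i : (forall j, 0 <= F j) -> F i <= \sum_j F j.
Proof. by move=> h; rewrite (bigD1 i) //= lerDl sumr_ge0. Qed.

Lemma fin_bound (A : set 'rV[int]_d) : finite_set A ->
  exists M : int, 0 <= M /\ forall y, A y -> forall i, `|y ord0 i| <= M.
Proof.
move/finite_fsetP => [X ->].
suff H : forall s : seq 'rV[int]_d, exists M : int, 0 <= M /\
    forall y, y \in s -> forall i, `|y ord0 i| <= M.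
  by have [M [M0 HM]] := H (finmap.enum_fset X); exists M; split => // y hy; apply: HM.
elim => [|x s [M [M0 HM]]].
  by exists 0.
exists (Num.max M (\sum_i `|x ord0 i|)); split; first by rewrite le_max M0.
move=> y; rewrite inE => /orP[/eqP ->|hy] i.
  by rewrite le_max; apply/orP; right; apply: le_sum_ord.
by rewrite le_max; apply/orP; left; apply: HM.
Qed.

Lemma U_bounded z : finite_set (cl z) -> bounded_set (U z).
Proof.
move=> /fin_bound [M [M0 HM]].
exists ((M + 1)%:~R); split; first exact: num_real.
move=> M' hM' p [nKp [w [hw hr]]].
have hM0 : (0 : R) <= M%:~R by rewrite ler0z.
apply: (@norm_le_coords R); first by rewrite intrD in hM'; lra.
move=> i; have h := HM w hr i.
have h' : (`|(w ord0 i)%:~R| : R) <= M%:~R by rewrite -intr_norm ler_int.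
have /andP[b1 b2] := hw i.
rewrite ler_norml in h'; move/andP: h' => [c1 c2].
rewrite intrD in hM'.
rewrite ler_norml; apply/andP; split; lra.
Qed.


Lemma box_finite (N : int) :
  finite_set [set y : 'rV[int]_d | forall i, `|y ord0 i| <= N].
Proof.
pose n := `|N|%N.
pose g := fun v : 'rV['I_(n + n).+1]_d =>
  (\row_i (((v ord0 i : nat)%:Z) - n%:Z) : 'rV[int]_d).
apply: (@sub_finite_set _ _ (g @` [set: 'rV['I_(n + n).+1]_d])); last first.
  exact/finite_image/finite_finset.
move=> y hy.
exists (\row_i (inord ((absz (y ord0 i + n%:Z))) : 'I_(n + n).+1)) => //.
apply/rowP => i; rewrite /g !mxE.
have h := hy i.
have hN : n%:Z = N by rewrite /n gez0_abs // (le_trans (normr_ge0 _) h).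
rewrite ler_norml in h; move/andP: h => [h1 h2].
have hy0 : 0 <= y ord0 i + n%:Z by rewrite hN; lia.
have ha : (absz (y ord0 i + n%:Z)%R)%:Z = y ord0 i + n%:Z by rewrite gez0_abs.
have hk : (absz (y ord0 i + n%:Z)%R < (n + n).+1)%N.
  rewrite -ltz_nat ha; lia.
by rewrite inordK // ha addrK.
Qed.

Lemma U_finite z : bounded_set (U z) -> finite_set (cl z).
Proof.
move=> [M [Mr HM]].
have hM1 : M < M + 1 by rewrite ltrDl.
have H := HM (M + 1) hM1.
pose N := Num.floor (M + 2).
apply: (@sub_finite_set _ _ [set y : 'rV[int]_d | forall i, `|y ord0 i| <= N]);
  last exact: box_finite.
move=> y hy i.
have hdy : U z (dp y).
  split; first exact: dp_notK.
  by exists y; split => //; exact: dp_Bb.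
have := H _ hdy => hn.
have := coord_le_norm R (dp y) i; rewrite dpE => hc.
have hb : `|((y ord0 i)%:~R + 1/2 : R)| <= M + 1 := le_trans hc hn.
rewrite ler_norml in hb; move/andP: hb => [b1 b2].
have c1 : y ord0 i <= N by rewrite /N Num.Theory.floor_ge_int; lra.
have c2 : - y ord0 i <= N by rewrite /N Num.Theory.floor_ge_int intrN; lra.
rewrite ler_norml; apply/andP; split => //; lia.
Qed.


Lemma out_bond z : (0 < d)%N -> finite_set (cl z) ->
  exists x y, rt z x /\ ~ rt z y /\ dual_adj d x y.
Proof.
move=> hd fin; apply: contrapT => hno.
have H : forall x y, rt z x -> dual_adj d x y -> rt z y.
  move=> x y hx ha; apply: contrapT => hy; apply: hno; exists x, y; split => //.
pose j0 := Ordinal hd.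
pose ray (n : nat) := \row_i (z ord0 i + (if i == j0 then n%:Z else 0)) : 'rV[int]_d.
have hray : forall n, rt z (ray n).
  elim => [|n IH].
    have -> : ray 0%N = z.
      by apply/rowP => i; rewrite /ray mxE; case: ifP => _; rewrite addr0.
    exact: rt_refl.
  apply: H IH _; apply: (dual_adj_of _ _ j0).
    by move=> i hi; rewrite /ray !mxE (negbTE hi).
  by rewrite /ray !mxE eqxx; lia.
have inj : {in [set: nat] &, injective ray}.
  move=> m n _ _ e; have := congr1 (fun r : 'rV[int]_d => r ord0 j0) e.
  by rewrite /ray !mxE eqxx => /addrI [].
have : finite_set (ray @` [set: nat]).
  apply: sub_finite_set fin; move=> _ [n _ <-]; exact: hray n.
rewrite (eq_finite_set (inj_card_eq inj)); exact: infinite_nat.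
Qed.

Lemma seg_close (a x t : R) : a <= x -> x <= a + 1 -> 0 < t ->
  `|x - (x + t * (a + 2^-1 - x))| <= t.
Proof.
move=> h1 h2 t0.
have hh : (2^-1 : R) = 1/2 by rewrite div1r.
have hb : `|a + 1/2 - x| <= 1 by rewrite ler_norml; apply/andP; split; lra.
rewrite hh opprD addrA subrr sub0r normrN normrM (gtr0_norm t0).
by rewrite -[leRHS]mulr1 ler_wpM2l // ltW.
Qed.

Lemma fs_bd z x y f : rt z x -> ~ rt z y -> dual_adj d x y ->
  fs f = Bb x `&` Bb y -> fs f `<=` boundary R d (U z).
Proof.
move=> hx hy ha hf.
have ho : omega f.
  apply/negPn/negP => /negbTE ho; apply: hy; apply: rt_trans hx _.
  by apply: rt_step; split => //; exists f.
move=> q hq; split; last first.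
  move=> /interior_subset [nKq _]; apply: nKq; apply/KP; exists f; split => //.
have hqx : Bb x q by move: hq; rewrite hf => -[].
move=> B /nbhs_ballP [e e0 hB].
pose t := Num.min 1 (e / 2).
have t0 : 0 < t by rewrite lt_min ltr01 /= divr_gt0.
have t1 : t <= 1 by rewrite ge_min lexx.
have te : t <= e / 2 by rewrite ge_min lexx orbT.
pose r := q + t *: (dp x - q).
have hro := seg_open x q t hqx (introT andP (conj t0 t1)).
exists r; split.
  split; first exact: (open_notK x).
  by exists x; split => // i; have /andP[h1 h2] := hro i; apply/andP; split; lra.
apply: hB; rewrite -ball_normE.
have hn : `|q - r| <= t.
  apply: (@norm_le_coords R); first exact: ltW.
  move=> i; rewrite /r !mxE; have /andP[h1 h2] := hqx i.
  exact: seg_close.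
have : `|q - r| < e by apply: (le_lt_trans hn); lra.
by [].
Qed.


Definition fa f : 'rV[int]_d := \row_i (if i == f.2 then f.1 ord0 i - 1 else f.1 ord0 i).

Lemma fa_adj f : dual_adj d (fa f) f.1.
Proof.
apply: (dual_adj_of _ _ f.2).
  by move=> i hi; rewrite /fa mxE (negbTE hi).
by rewrite /fa mxE eqxx subrK.
Qed.

Lemma Bb_mid f w : Bb w (mid f) -> w = fa f \/ w = f.1.
Proof.
move=> H.
have ho : forall i, i != f.2 -> w ord0 i = f.1 ord0 i.
  move=> i hi; have := H i; rewrite /mid mxE (negbTE hi) => /andP[h1 h2].
  have /andP[k1 k2] := half_bounds.
  have a1 : w ord0 i < f.1 ord0 i + 1 by rewrite -(ltr_int R) intrD; lra.
  have a2 : f.1 ord0 i < w ord0 i + 1 by rewrite -(ltr_int R) intrD; lra.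
  by apply/eqP; rewrite eq_le -ltzD1 a1 -ltzD1 a2.
have := H f.2; rewrite /mid mxE eqxx => /andP[h1 h2].
have a1 : w ord0 f.2 <= f.1 ord0 f.2 by rewrite -(ler_int R).
have a2 : f.1 ord0 f.2 <= w ord0 f.2 + 1 by rewrite -(ler_int R) intrD.
have [e|e] : w ord0 f.2 = f.1 ord0 f.2 \/ w ord0 f.2 = f.1 ord0 f.2 - 1 by lia.
  right; apply/rowP => i; have [->|hi] := eqVneq i f.2; first exact: e.
  exact: ho.
left; apply/rowP => i; rewrite /fa mxE; have [->|hi] := eqVneq i f.2; first exact: e.
exact: ho.
Qed.

Lemma closure_ab z f : closure (U z) (mid f) -> rt z (fa f) \/ rt z f.1.
Proof.
move=> hcl.
have [q [[nKq [w [hw hr]]] [Hq _]]] := hcl _ (loc (mid f)).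
by have [e|e] := Bb_mid f w (Hq w hw); subst w; [left|right].
Qed.

Lemma dual_adj_neq x y : dual_adj d x y -> x <> y.
Proof.
move=> h e; subst y; move: h; rewrite /dual_adj big1 // => i _.
by rewrite subrr normr0.
Qed.

Lemma EB (C : set 'rV[int]_d) x y : dual_adj d x y -> C x -> ~ C y ->
  edge_boundary d C [set x; y].
Proof.
move=> h hx hy; split; first by exists x, y.
by exists x, y; split => //; split => //; exact: dual_adj_neq.
Qed.

Lemma pair_cases x y x' y' : [set x; y] = [set x'; y'] -> x <> y ->
  (x' = x /\ y' = y) \/ (x' = y /\ y' = x).
Proof.
move=> e nxy.
have hx' : [set x; y] x' by rewrite e; left.
have hy' : [set x; y] y' by rewrite e; right.
have hx : [set x'; y'] x by rewrite -e; left.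
have hy : [set x'; y'] y by rewrite -e; right.
have [ex'|ex'] : x' = x \/ x' = y by case: hx'; [left|right].
all: have [ey'|ey'] : y' = x \/ y' = y by case: hy'; [left|right].
all: subst x' y'.
- by exfalso; case: hy => hy; apply: nxy.
- by left.
- by right.
- by exfalso; case: hx => hx; apply: nxy.
Qed.

Lemma adj_face x y : dual_adj d x y -> exists f, fs f = Bb x `&` Bb y.
Proof.
move=> h.
have [j hj] : exists j, x ord0 j != y ord0 j.
  apply: contrapT => hn; move: h; rewrite /dual_adj big1 // => i _.
  have : x ord0 i = y ord0 i by apply: contrapT => hne; apply: hn; exists i; apply/eqP.
  by move=> ->; rewrite subrr normr0.
move: h; rewrite /dual_adj (bigD1 j) //= => h.
have hj1 : 0 < `|x ord0 j - y ord0 j|.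
  by rewrite normr_gt0 subr_eq0.
have hs : \sum_(i | i != j) `|x ord0 i - y ord0 i| = 0.
  apply/eqP; rewrite eq_le sumr_ge0 ?andbT //.
  rewrite -(lerD2l `|x ord0 j - y ord0 j|) addr0 h -gtz0_ge1 //.
have ho : forall i, i != j -> x ord0 i = y ord0 i.
  move=> i hi; move/eqP: hs; rewrite psumr_eq0 // => /allP /(_ i).
  rewrite mem_index_enum hi => /(_ isT) /implyP /(_ isT).
  by rewrite normr_eq0 subr_eq0 => /eqP.
rewrite hs addr0 in h.
have [e|e] : y ord0 j = x ord0 j + 1 \/ x ord0 j = y ord0 j + 1.
  have [hle|hgt] := lerP (x ord0 j - y ord0 j) 0.
    by rewrite ler0_norm // in h; left; lia.
  by rewrite gtr0_norm // in h; right; lia.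
  by exists (fface x j); exact: fface_eq.
exists (fface y j); rewrite setIC; apply: fface_eq => // i hi; exact/esym/ho.
Qed.


Lemma rtT a b c : rt a b -> rt b c -> rt a c.
Proof. move=> h1 h2; exact: rt_trans h1 h2. Qed.

Lemma adj_case z z' a b : dual_adj d a b -> rt z a -> ~ rt z b ->
  (rt z' a \/ rt z' b) ->
  edge_boundary d (cl z) `&` edge_boundary d (cl z') !=set0.
Proof.
move=> hab ha hb h'; exists [set a; b]; split; first exact: EB.
case: h' => h'.
  have nb : ~ rt z' b.
    by move=> hb'; apply: hb; apply: (rtT _ _ _ ha (rtT _ _ _ (rt_sym _ _ h') hb')).
  exact: EB.
have na : ~ rt z' a.
  move=> ha'; apply: hb; apply: (rtT _ _ _ ha (rtT _ _ _ (rt_sym _ _ ha') h')).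
rewrite setUC; apply: EB => //; exact: dual_adj_sym.
Qed.

Lemma adj_fwd z z' : (0 < d)%N -> finite_set (cl z) ->
  adjacent_holes R d (U z) (U z') ->
  edge_boundary d (cl z) `&` edge_boundary d (cl z') !=set0.
Proof.
move=> hd fin [f [h1 h2]].
have c1 := closure_ab z f (h1 _ (mid_fs f)).1.
have c2 := closure_ab z' f (h2 _ (mid_fs f)).1.
have hadj := fa_adj f.
have [hA|hA] := pselect (rt z (fa f)); have [hB|hB] := pselect (rt z f.1).
- have hzz : rt z' z.
    case: c2 => h.
      exact: (rtT _ _ _ h (rt_sym _ _ hA)).
    exact: (rtT _ _ _ h (rt_sym _ _ hB)).
  have [x [y [hx [hy hxy]]]] := out_bond z hd fin.
  exists [set x; y]; split; first exact: EB.
  apply: EB => //; first exact: (rtT _ _ _ hzz hx).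
  by move=> hy'; apply: hy; apply: (rtT _ _ _ (rt_sym _ _ hzz) hy').
- exact: adj_case hadj hA hB c2.
- apply: (adj_case z z' f.1 (fa f)) => //; first exact: dual_adj_sym.
  by case: c2; [right|left].
- by exfalso; case: c1.
Qed.

Lemma adj_bwd z z' :
  edge_boundary d (cl z) `&` edge_boundary d (cl z') !=set0 ->
  adjacent_holes R d (U z) (U z').
Proof.
move=> [e [[[u [v [huv eu]]] [x [y [ex [nxy [hx hy]]]]]]
             [_ [x' [y' [ex' [nxy' [hx' hy']]]]]]]].
have hxy : dual_adj d x y.
  have := pair_cases u v x y _ (dual_adj_neq u v huv).
  rewrite -eu -ex => /(_ erefl) [[-> ->]|[-> ->]] //.
  exact: dual_adj_sym.
have [f hf] := adj_face x y hxy.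
exists f; split; first exact: fs_bd z x y f hx hy hxy hf.
have := pair_cases x y x' y' _ nxy; rewrite -ex -ex' => /(_ erefl).
case=> [[ex1 ey1]|[ex1 ey1]]; subst x' y'.
  exact: fs_bd z' x y f hx' hy' hxy hf.
apply: (fs_bd z' y x f hx' hy' (dual_adj_sym _ _ hxy)).
by rewrite setIC.
Qed.

Lemma U_eq_rt a b : rt a b -> U a = U b.
Proof. by move=> h; rewrite -!U_comp; apply: same_connected_component; exact: rt_comp. Qed.

Lemma main_sec (hd : (2 <= d)%N) :
  (forall C, finite_open_cluster R d omega C ->
     exists! D, hole R d omega D /\ D `&` dual_lattice R d = dual_pt R d @` C)
  /\
  (forall D, hole R d omega D ->
     exists C, finite_open_cluster R d omega C /\
               D `&` dual_lattice R d = dual_pt R d @` C)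
  /\
  (forall C C' D D',
     finite_open_cluster R d omega C -> finite_open_cluster R d omega C' ->
     hole R d omega D -> hole R d omega D' ->
     D `&` dual_lattice R d = dual_pt R d @` C ->
     D' `&` dual_lattice R d = dual_pt R d @` C' ->
     (adjacent_holes R d D D' <->
        edge_boundary d C `&` edge_boundary d C' !=set0)).
Proof.
have hd0 : (0 < d)%N by apply: leq_trans hd.
split; [|split].
- move=> C [[x ->] fin].
  exists (U x); split.
    split; last exact: U_lat.
    split; last exact: U_bounded.
    exists (dual_pt R d x); split; first exact: dp_notK.
    by rewrite U_comp.
  move=> D' [hD' hl'].
  have [z' ez] := hole_U _ hD'; subst D'.
  rewrite U_lat in hl'.
  have ecl := img_inj _ _ hl'.
  have hr : cl z' x by rewrite ecl; exact: rt_refl.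
  exact: esym (U_eq_rt _ _ hr).
- move=> D hD.
  have [z ez] := hole_U _ hD; subst D.
  exists (cl z); split; last exact: U_lat.
  split; first by exists z.
  exact: U_finite _ hD.2.
- move=> C C' D D' [[x ->] fx] [[x' ->] fx'] hD hD' hl hl'.
  have [z ez] := hole_U _ hD; subst D.
  have [z' ez'] := hole_U _ hD'; subst D'.
  rewrite U_lat in hl; rewrite U_lat in hl'.
  have e1 := img_inj _ _ hl; have e2 := img_inj _ _ hl'.
  rewrite -e1 -e2; rewrite -e1 in fx.
  split; first exact: adj_fwd.
  exact: adj_bwd.
Qed.


End Main.

Theorem proposition3p1 (R : realType) (d : nat) (hd : (2 <= d)%N)
    (omega : config d) :
  (forall C, finite_open_cluster R d omega C ->
     exists! D, hole R d omega D /\ D `&` dual_lattice R d = dual_pt R d @` C)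
  /\
  (forall D, hole R d omega D ->
     exists C, finite_open_cluster R d omega C /\
               D `&` dual_lattice R d = dual_pt R d @` C)
  /\
  (forall C C' D D',
     finite_open_cluster R d omega C -> finite_open_cluster R d omega C' ->
     hole R d omega D -> hole R d omega D' ->
     D `&` dual_lattice R d = dual_pt R d @` C ->
     D' `&` dual_lattice R d = dual_pt R d @` C' ->
     (adjacent_holes R d D D' <->
        edge_boundary d C `&` edge_boundary d C' !=set0)).
Proof. exact: main_sec. Qed.
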